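(* Let $f\colon A\to X$ and $g\colon B\to Y$ be entire maps of marked simplicial sets. Then the Leibniz product $f\hat\times g\colon(A\times Y)\cup_{A\times B}(X\times B)\to X\times Y$ with respect to the cartesian product of marked simplicial sets is a complicial marking extension.
   Context: A marked simplicial set is a simplicial set $X$ with a set of marked simplices of positive dimension containing all degenerate simplices; maps are simplicial maps preserving marked simplices; the category is $\mathsf{sSet}^+$. Simplicial operators act on the right. A map is entire if it is an isomorphism on underlying simplicial sets. The cartesian product $X\times Y$ in $\mathsf{sSet}^+$ has underlying simplicial set $X\times Y$, with $(x,y)$ marked iff $x$ and $y$ are both marked. For $n\ge1$ and $0\le k\le n$, the $k$-complicial $n$-simplex $\Delta^n_k$ is $\Delta^n$ in which a non-degenerate simplex is marked iff it contains all vertices in $\{k-1,k,k+1\}\cap[n]$. For $n\ge2$, $(\Delta^n_k)''$ is $\Delta^n_k$ with additionally all $(n-1)$-simplices marked, and $(\Delta^n_k)'$ is $\Delta^n_k$ with additionally all $(n-1)$-faces other than the $k$-th face $\delta_k$ marked; the inclusion $(\Delta^n_k)'\to(\Delta^n_k)''$ is an elementary complicial marking extension. A complicial marking extension is a map in the closure of the elementary complicial marking extensions under pushouts along arbitrary maps and transfinite composition. *)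

(* Defs.v *)
From mathcomp Require Import all_boot.
Set Implicit Arguments. Unset Strict Implicit. Unset Printing Implicit Defensive.

(* Simplicial operators [m] -> [n] : monotone maps 'I_m.+1 -> 'I_n.+1 *)
Record sop (m n : nat) := Sop {
  sop_fun : {ffun 'I_m.+1 -> 'I_n.+1};
  sop_mono : [forall i : 'I_m.+1, forall j : 'I_m.+1,
                 (i <= j) ==> (sop_fun i <= sop_fun j)] }.

Lemma sop_eq m n (a b : sop m n) :
  (forall i, sop_fun a i = sop_fun b i) -> a = b.
Proof.
case: a b => [f fm] [g gm] /= H.
have E : f = g by apply/ffunP.
subst g; by rewrite (bool_irrelevance fm gm).
Qed.

Lemma sop_id_mono n :
  [forall i : 'I_n.+1, forall j : 'I_n.+1,
     (i <= j) ==> (([ffun x => x] : {ffun 'I_n.+1 -> 'I_n.+1}) i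
                   <= ([ffun x => x] : {ffun 'I_n.+1 -> 'I_n.+1}) j)].
Proof. by apply/forallP=> i; apply/forallP=> j; rewrite !ffunE; apply/implyP. Qed.

Definition sop_id n : sop n n := Sop (sop_id_mono n).

Lemma sop_comp_mono k m n (a : sop m n) (b : sop k m) :
  [forall i : 'I_k.+1, forall j : 'I_k.+1,
     (i <= j) ==> (([ffun x => sop_fun a (sop_fun b x)] : {ffun 'I_k.+1 -> 'I_n.+1}) i
                   <= ([ffun x => sop_fun a (sop_fun b x)] : {ffun 'I_k.+1 -> 'I_n.+1}) j)].
Proof.
apply/forallP=> i; apply/forallP=> j; rewrite !ffunE; apply/implyP=> hij.
have hb := sop_mono b; have ha := sop_mono a.
move/forallP: hb => /(_ i) /forallP /(_ j) /implyP /(_ hij) hb.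
by move/forallP: ha => /(_ (sop_fun b i)) /forallP /(_ (sop_fun b j)) /implyP /(_ hb).
Qed.

Definition sop_comp k m n (a : sop m n) (b : sop k m) : sop k n :=
  Sop (sop_comp_mono a b).

(* Simplicial sets; simplicial operators act on the right:
   act a x  is  x . a  for  a : [m] -> [n], x an n-simplex.           *)
Record sSet := SSet {
  simp : nat -> Type;
  act : forall m n, sop m n -> simp n -> simp m;
  act_id : forall n (x : simp n), act (sop_id n) x = x;
  act_comp : forall k m n (a : sop m n) (b : sop k m) (x : simp n),
      act b (act a x) = act (sop_comp a b) x }.

Definition degenerate (X : sSet) n (x : simp X n) : Prop :=
  exists m (s : sop n m) (y : simp X m), m < n /\ x = act s y.

Record msSet := MSSet {
  uss : sSet;
  marked : forall n, simp uss n -> Prop;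
  marked_pos : forall n (x : simp uss n), marked x -> 0 < n;
  marked_degen : forall n (x : simp uss n), degenerate x -> marked x }.

Record mmap (X Y : msSet) := MMap {
  mfun : forall n, simp (uss X) n -> simp (uss Y) n;
  mfun_nat : forall m n (a : sop m n) (x : simp (uss X) n),
      mfun (act a x) = act a (mfun x);
  mfun_mark : forall n (x : simp (uss X) n), marked x -> marked (mfun x) }.

Definition meq (X Y : msSet) (f g : mmap X Y) : Prop :=
  forall n (x : simp (uss X) n), mfun f x = mfun g x.

Definition mid (X : msSet) : mmap X X :=
  @MMap X X (fun n x => x) (fun m n a x => erefl) (fun n x h => h).

Lemma mcomp_nat (X Y Z : msSet) (g : mmap Y Z) (f : mmap X Y) m n (a : sop m n)
  (x : simp (uss X) n) : mfun g (mfun f (act a x)) = act a (mfun g (mfun f x)).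
Proof. by rewrite !mfun_nat. Qed.

Definition mcomp (X Y Z : msSet) (g : mmap Y Z) (f : mmap X Y) : mmap X Z :=
  @MMap X Z (fun n x => mfun g (mfun f x)) (mcomp_nat g f)
    (fun n x h => mfun_mark g (mfun_mark f h)).

Definition entire (X Y : msSet) (f : mmap X Y) : Prop :=
  forall n, bijective (@mfun X Y f n).

Lemma sprod_act_id (X Y : sSet) n (x : (simp X n * simp Y n)%type) :
  (act (sop_id n) x.1, act (sop_id n) x.2) = x.
Proof. by case: x => a b; rewrite /= !act_id. Qed.

Lemma sprod_act_comp (X Y : sSet) k m n (a : sop m n) (b : sop k m)
  (x : (simp X n * simp Y n)%type) :
  (act b (act a x.1, act a x.2).1, act b (act a x.1, act a x.2).2)
  = (act (sop_comp a b) x.1, act (sop_comp a b) x.2).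
Proof. by rewrite /= !act_comp. Qed.

Definition sprod (X Y : sSet) : sSet :=
  @SSet (fun n => (simp X n * simp Y n)%type)
    (fun m n a x => (act a x.1, act a x.2))
    (@sprod_act_id X Y) (@sprod_act_comp X Y).

Definition prod_marked (X Y : msSet) n (x : simp (sprod (uss X) (uss Y)) n) : Prop :=
  marked x.1 /\ marked x.2.

Lemma prod_marked_pos (X Y : msSet) n (x : simp (sprod (uss X) (uss Y)) n) :
  prod_marked x -> 0 < n.
Proof. by case=> h _; exact: marked_pos h. Qed.

Lemma prod_marked_degen (X Y : msSet) n (x : simp (sprod (uss X) (uss Y)) n) :
  degenerate x -> prod_marked x.
Proof.
case=> m [s [y [lt ->]]]; split; apply: marked_degen.
- by exists m, s, y.1.
- by exists m, s, y.2.
Qed.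

Definition mprod_ms (X Y : msSet) : msSet :=
  @MSSet (sprod (uss X) (uss Y)) (@prod_marked X Y)
    (@prod_marked_pos X Y) (@prod_marked_degen X Y).

Lemma mprod_nat (X Y X' Y' : msSet) (f : mmap X X') (g : mmap Y Y') m n (a : sop m n)
  (x : simp (uss (mprod_ms X Y)) n) :
  (mfun f (act a x.1), mfun g (act a x.2))
  = (act a (mfun f x.1, mfun g x.2).1, act a (mfun f x.1, mfun g x.2).2).
Proof. by rewrite /= !mfun_nat. Qed.

Lemma mprod_mark (X Y X' Y' : msSet) (f : mmap X X') (g : mmap Y Y') n
  (x : simp (uss (mprod_ms X Y)) n) :
  @marked (mprod_ms X Y) n x ->
  @marked (mprod_ms X' Y') n (mfun f x.1, mfun g x.2).
Proof. by case=> h1 h2; split; apply: mfun_mark. Qed.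

Definition mprod (X Y X' Y' : msSet) (f : mmap X X') (g : mmap Y Y') :
  mmap (mprod_ms X Y) (mprod_ms X' Y') :=
  @MMap (mprod_ms X Y) (mprod_ms X' Y') (fun n x => (mfun f x.1, mfun g x.2))
    (@mprod_nat X Y X' Y' f g) (@mprod_mark X Y X' Y' f g).

Lemma delta_act_id n m (x : sop m n) : sop_comp x (sop_id m) = x.
Proof. by apply: sop_eq => i; rewrite !ffunE. Qed.

Lemma delta_act_comp n k m p (a : sop m p) (b : sop k m) (x : sop p n) :
  sop_comp (sop_comp x a) b = sop_comp x (sop_comp a b).
Proof. by apply: sop_eq => i; rewrite !ffunE. Qed.

Definition sdelta (n : nat) : sSet :=
  @SSet (fun m => sop m n) (fun m p a x => sop_comp x a)
    (@delta_act_id n) (@delta_act_comp n).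

Definition contains_hull (n k m : nat) (a : sop m n) : Prop :=
  forall v, v <= n -> k - 1 <= v -> v <= k + 1 ->
    exists i : 'I_m.+1, nat_of_ord (sop_fun a i) = v.

Definition delta_marked (n k : nat) (extra : forall m, sop m n -> Prop)
  m (a : simp (sdelta n) m) : Prop :=
  0 < m /\ (degenerate a \/ (~ degenerate a /\ contains_hull k a) \/ extra m a).

Lemma delta_marked_pos n k extra m (a : simp (sdelta n) m) :
  delta_marked k extra a -> 0 < m.
Proof. by case. Qed.

Lemma delta_marked_degen n k extra m (a : simp (sdelta n) m) :
  degenerate a -> delta_marked k extra a.
Proof.
move=> d; split; last by left.
by case: d => p [s [y [lt _]]]; apply: leq_ltn_trans lt.
Qed.

Definition mdelta (n k : nat) (extra : forall m, sop m n -> Prop) : msSet :=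
  @MSSet (sdelta n) (@delta_marked n k extra)
    (@delta_marked_pos n k extra) (@delta_marked_degen n k extra).

Definition cDelta (n k : nat) : msSet := @mdelta n k (fun m a => False).

Definition cDelta'' (n k : nat) : msSet := @mdelta n k (fun m a => m = n - 1).

(* (Delta^n_k)' : additionally all (n-1)-faces (non-degenerate (n-1)-simplices)
   other than the k-th face delta_k (= the one not containing vertex k) marked *)
Definition cDelta' (n k : nat) : msSet :=
  @mdelta n k (fun m a => m = n - 1 /\ ~ degenerate (a : simp (sdelta n) m) /\
                         exists i : 'I_m.+1, nat_of_ord (sop_fun a i) = k).

Lemma elem_mark n k m (a : simp (uss (cDelta' n k)) m) :
  marked a -> @marked (cDelta'' n k) m a.
Proof. by case=> h [d|[d|[e _]]]; split=> //; [left|right; left|right; right]. Qed.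

Definition elem (n k : nat) : mmap (cDelta' n k) (cDelta'' n k) :=
  @MMap (cDelta' n k) (cDelta'' n k) (fun m a => a) (fun m p a x => erefl)
    (@elem_mark n k).

(* Pushout squares (universal property):
        i
    A ----> B
  f |       | g
    v       v
    C ----> D
        j                                                               *)
Definition is_pushout (A B C D : msSet) (i : mmap A B) (f : mmap A C)
  (g : mmap B D) (j : mmap C D) : Prop :=
  meq (mcomp g i) (mcomp j f) /\
  forall (Z : msSet) (u : mmap B Z) (v : mmap C Z),
    meq (mcomp u i) (mcomp v f) ->
    (exists w : mmap D Z, meq (mcomp w g) u /\ meq (mcomp w j) v) /\
    (forall w w' : mmap D Z, meq (mcomp w g) u -> meq (mcomp w j) v ->
        meq (mcomp w' g) u -> meq (mcomp w' j) v -> meq w w').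

Definition is_wellorder (I : Type) (lt : I -> I -> Prop) : Prop :=
  well_founded lt /\ (forall i j k, lt i j -> lt j k -> lt i k) /\
  (forall i j, i = j \/ lt i j \/ lt j i).

Definition wle (I : Type) (lt : I -> I -> Prop) (i j : I) : Prop := i = j \/ lt i j.

Definition wsucc (I : Type) (lt : I -> I -> Prop) (i j : I) : Prop :=
  lt i j /\ forall k, lt i k -> wle lt j k.

Definition wlimit (I : Type) (lt : I -> I -> Prop) (j : I) : Prop :=
  (exists i, lt i j) /\ ~ (exists i, wsucc lt i j).

Record chain (I : Type) (lt : I -> I -> Prop) := Chain {
  ch_obj : I -> msSet;
  ch_map : forall i j, wle lt i j -> mmap (ch_obj i) (ch_obj j);
  ch_id : forall i (p : wle lt i i), meq (ch_map p) (mid (ch_obj i));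
  ch_comp : forall i j k (p : wle lt i j) (q : wle lt j k) (r : wle lt i k),
      meq (mcomp (ch_map q) (ch_map p)) (ch_map r) }.

Definition is_colim_on (I : Type) (lt : I -> I -> Prop) (X : chain lt)
  (S : I -> Prop) (L : msSet) (c : forall i, S i -> mmap (ch_obj X i) L) : Prop :=
  (forall i j (si : S i) (sj : S j) (p : wle lt i j),
      meq (mcomp (c j sj) (ch_map X p)) (c i si)) /\
  forall (Z : msSet) (d : forall i, S i -> mmap (ch_obj X i) Z),
    (forall i j (si : S i) (sj : S j) (p : wle lt i j),
        meq (mcomp (d j sj) (ch_map X p)) (d i si)) ->
    (exists w : mmap L Z, forall i (si : S i), meq (mcomp w (c i si)) (d i si)) /\
    (forall w w' : mmap L Z,
        (forall i (si : S i), meq (mcomp w (c i si)) (d i si)) ->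
        (forall i (si : S i), meq (mcomp w' (c i si)) (d i si)) -> meq w w').

Definition mclass := forall X Y : msSet, mmap X Y -> Prop.

Definition contains_elementary (P : mclass) : Prop :=
  forall n k, 2 <= n -> k <= n -> P _ _ (elem n k).

Definition closed_pushout (P : mclass) : Prop :=
  forall (A B C D : msSet) (i : mmap A B) (f : mmap A C) (g : mmap B D) (j : mmap C D),
    is_pushout i f g j -> P _ _ i -> P _ _ j.

Definition closed_transfinite (P : mclass) : Prop :=
  forall (J : Type) (lt : J -> J -> Prop) (z : J) (X : chain lt),
    is_wellorder lt ->
    (forall i, wle lt z i) ->
    (forall j, wlimit lt j ->
       @is_colim_on J lt X (fun i => lt i j) (ch_obj X j)
         (fun i (h : lt i j) => ch_map X (or_intror h : wle lt i j))) ->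
    (forall i j (p : wle lt i j), wsucc lt i j -> P _ _ (ch_map X p)) ->
    forall (L : msSet) (c : forall i, True -> mmap (ch_obj X i) L),
      @is_colim_on J lt X (fun _ => True) L c -> P _ _ (c z I).

Definition complicial_marking_extension (X Y : msSet) (h : mmap X Y) : Prop :=
  forall P : mclass,
    contains_elementary P -> closed_pushout P -> closed_transfinite P -> P _ _ h.

(* Main.v *)
From HB Require Import structures.
From mathcomp Require Import all_boot zify.
From mathcomp Require Import boolp wochoice.
Require Import Defs.
From Stdlib Require Import FunctionalExtensionality ProofIrrelevance Classical IndefiniteDescription.
Set Implicit Arguments. Unset Strict Implicit. Unset Printing Implicit Defensive.

Lemma meq_eq (X Y : msSet) (f g : mmap X Y) : meq f g -> f = g.
Proof.
case: f g => f fn fm [g gn gm] /= H.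
have E : f = g.
  apply: functional_extensionality_dep => n; apply: functional_extensionality => x.
  exact: H.
subst g; f_equal; apply: proof_irrelevance.
Qed.

Lemma iso_P (P : mclass) : closed_transfinite P ->
  forall (U V : msSet) (phi : mmap U V) (psi : mmap V U),
  meq (mcomp psi phi) (mid U) -> meq (mcomp phi psi) (mid V) -> P _ _ phi.
Proof.
move=> HT U V phi psi H1 H2.
pose lt := fun (_ _ : unit) => False.
pose Ch := @Chain unit lt (fun _ => U) (fun _ _ _ => mid U)
  (fun _ _ _ _ => erefl) (fun _ _ _ _ _ _ _ _ => erefl).
have wo : is_wellorder lt.
  split; first by move=> i; constructor=> j [].
  by split=> // [[] []]; left.
have z0 : forall i, wle lt tt i by case; left.
have := (@HT unit lt tt Ch wo z0 _ _ V (fun _ _ => phi)); apply.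
- by move=> j [[i []]].
- by move=> i j p [[]].
split=> [i j _ _ p n x //|Z d Hd].
split.
  exists (mcomp (d tt I) psi) => -[] [] n x /=.
  by have := H1 n x => /= ->.
move=> w w' Hw Hw' n x.
have := H2 n x => /= <-.
by have := Hw tt I n (mfun psi x); have := Hw' tt I n (mfun psi x) => /= -> ->.
Qed.

Inductive three := t0 | t1 | t2.
Definition idx3 (a : three) : nat := match a with t0 => 0 | t1 => 1 | t2 => 2 end.
Definition lt3 (a b : three) : Prop := idx3 a < idx3 b.

Lemma wle3 a b : wle lt3 a b -> idx3 a <= idx3 b.
Proof. by case=> [->//|]; rewrite /lt3 => /ltnW. Qed.

Section Comp3.
Variables (U V W : msSet) (phi : mmap U V) (psi : mmap V W).
Definition obj3 (a : three) : msSet := match a with t0 => U | t1 => V | t2 => W end.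
Definition map3 (a b : three) : wle lt3 a b -> mmap (obj3 a) (obj3 b) :=
  match a, b return wle lt3 a b -> mmap (obj3 a) (obj3 b) with
  | t0, t0 => fun _ => mid U
  | t0, t1 => fun _ => phi
  | t0, t2 => fun _ => mcomp psi phi
  | t1, t1 => fun _ => mid V
  | t1, t2 => fun _ => psi
  | t2, t2 => fun _ => mid W
  | t1, t0 => fun p => False_rect _ (notF (wle3 p))
  | t2, t0 => fun p => False_rect _ (notF (wle3 p))
  | t2, t1 => fun p => False_rect _ (notF (wle3 p))
  end.

Lemma map3_id a (p : wle lt3 a a) : meq (map3 p) (mid (obj3 a)).
Proof. by case: a p. Qed.

Lemma map3_comp a b c (p : wle lt3 a b) (q : wle lt3 b c) (r : wle lt3 a c) :
  meq (mcomp (map3 q) (map3 p)) (map3 r).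
Proof.
have := wle3 p; have := wle3 q.
by case: a b c p q r => [] [] [].
Qed.

Definition chain3 := @Chain three lt3 obj3 map3 map3_id map3_comp.
End Comp3.

Lemma comp_P (P : mclass) : closed_transfinite P ->
  forall (U V W : msSet) (phi : mmap U V) (psi : mmap V W),
  P _ _ phi -> P _ _ psi -> P _ _ (mcomp psi phi).
Proof.
move=> HT U V W phi psi Pphi Ppsi.
have wo : is_wellorder lt3.
  split.
    have H : forall n a, idx3 a <= n -> Acc lt3 a.
      elim=> [|n IH] a ha; constructor=> b; rewrite /lt3.
        by move=> hb; move: (leq_trans hb ha).
      by move=> hb; apply: IH; rewrite -ltnS (leq_trans hb ha).
    by move=> a; apply: (H (idx3 a)).
  split; first by move=> a b c; rewrite /lt3; apply: ltn_trans.
  by case=> [] []; rewrite /lt3 /=; auto.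
have z0 : forall i, wle lt3 t0 i.
  by case; [left|right|right].
pose c := fun (i : three) (_ : True) =>
  match i return mmap (obj3 U V W i) W with
  | t0 => mcomp psi phi | t1 => psi | t2 => mid W end.
have := (@HT three lt3 t0 (chain3 phi psi) wo z0 _ _ W c); apply.
- move=> j [[i hi] nsucc]; exfalso; apply: nsucc.
  case: i hi; case: j => //= _.
  + exists t0; split=> //; case=> //; by [left|right].
  + exists t1; split=> //; case=> //; by [left|right].
  + exists t1; split=> //; case=> //; by [left|right].
- move=> i j p [hij hs].
  case: i j p hij hs => [] [] //= p _ hs.
  by have := hs t1 (erefl true); case=> //; rewrite /lt3.
split.
  by move=> i j si sj p; have := wle3 p; case: i j p si sj => [] [] //= p [] [] n x /=; rewrite ?(map3_id, mcomp) //.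
move=> Z d Hd; split.
  exists (d t2 I) => i si; case: i si => [] [] n x /=.
  + by have := Hd t0 t2 I I (or_intror (erefl true)) n x.
  + by have := Hd t1 t2 I I (or_intror (erefl true)) n x.
  + by [].
move=> w w' Hw Hw' n x.
by have := Hw t2 I n x; have := Hw' t2 I n x => /= -> ->.
Qed.

Section Marks.
Variable T : sSet.

Record mark := Mark {
  mM : forall n, simp T n -> Prop;
  mpos : forall n (x : simp T n), mM x -> 0 < n;
  mdeg : forall n (x : simp T n), degenerate x -> mM x }.

Definition obj (m : mark) : msSet := @MSSet T (@mM m) (@mpos m) (@mdeg m).

Definition submark (m m' : mark) := forall n (x : simp T n), mM m x -> mM m' x.

Definition incl (m m' : mark) (H : submark m m') : mmap (obj m) (obj m') :=
  @MMap (obj m) (obj m') (fun n x => x) (fun _ _ _ _ => erefl) H.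

Lemma incl_iso (P : mclass) : closed_transfinite P ->
  forall m m' (H : submark m m'), submark m' m -> P _ _ (incl H).
Proof.
move=> HT m m' H H'; apply: (@iso_P P HT _ _ (incl H) (incl H')) => //.
Qed.

Section MChain.
Variables (J : Type) (lt : J -> J -> Prop) (Mk : J -> mark)
  (mono : forall i j, wle lt i j -> submark (Mk i) (Mk j)).

Definition mchain : chain lt :=
  @Chain J lt (fun i => obj (Mk i)) (fun i j p => incl (mono p))
    (fun _ _ _ _ => erefl) (fun _ _ _ _ _ _ _ _ => erefl).

Lemma mchain_colim (S : J -> Prop) (ML : mark)
  (sub : forall i, S i -> submark (Mk i) ML)
  (cov : forall n (x : simp T n), mM ML x -> exists i, S i /\ mM (Mk i) x)
  (tot : forall i j, i = j \/ lt i j \/ lt j i)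
  (ne : exists i, S i) :
  @is_colim_on J lt mchain S (obj ML) (fun i si => incl (sub i si)).
Proof.
split=> [//|Z d Hd].
have [i0 si0] := ne.
have agree : forall i (si : S i) n x, mfun (d i si) x = mfun (d i0 si0) x :> simp (uss Z) n.
  move=> i si n x; case: (tot i i0) => [E|[lt1|lt1]].
  - subst i0; by have := Hd i i si si0 (or_introl erefl) n x.
  - by have := Hd i i0 si si0 (or_intror lt1) n x.
  - by have := Hd i0 i si0 si (or_intror lt1) n x.
have mk : forall n (x : simp (uss (obj ML)) n), marked x -> marked (mfun (d i0 si0) x).
  move=> n x /cov [i [si mi]]; rewrite -(agree i si).
  exact: (mfun_mark (d i si) mi).
split.
  exists (@MMap (obj ML) Z (fun n x => mfun (d i0 si0) x)
            (fun m n a x => @mfun_nat _ _ (d i0 si0) m n a x) mk).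
  move=> i si n x /=; by rewrite (agree i si).
move=> w w' Hw Hw' n x.
by have := Hw i0 si0 n x; have := Hw' i0 si0 n x => /= -> ->.
Qed.
End MChain.

Lemma smap_nat N (sg : simp T N) m p (a : sop m p) (x : sop p N) :
  act (sop_comp x a) sg = act a (act x sg).
Proof. by rewrite act_comp. Qed.

Section PushStep.
Variables (N k : nat) (sg : simp T N) (M M' : mark) (HMM : submark M M').
Hypothesis H1 : forall m (a : sop m N), @marked (cDelta' N k) m a -> mM M (act a sg).
Hypothesis H2 : forall m (a : sop m N), @marked (cDelta'' N k) m a -> mM M' (act a sg).
Hypothesis H3 : forall n (x : simp T n), mM M' x -> mM M x \/
   exists a : sop n N, @marked (cDelta'' N k) n a /\ x = act a sg.

Definition sm1 : mmap (cDelta' N k) (obj M) :=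
  @MMap (cDelta' N k) (obj M) (fun m a => act a sg) (fun m p a x => smap_nat sg a x) H1.
Definition sm2 : mmap (cDelta'' N k) (obj M') :=
  @MMap (cDelta'' N k) (obj M') (fun m a => act a sg) (fun m p a x => smap_nat sg a x) H2.

Lemma push_step : is_pushout (elem N k) sm1 sm2 (incl HMM).
Proof.
split=> [//|Z u v Huv].
have mk : forall n (x : simp (uss (obj M')) n), marked x -> marked (mfun v x).
  move=> n x /H3 [mx|[a [ma ->]]]; first exact: (mfun_mark v mx).
  have := Huv n a => /= <-; exact: (mfun_mark u ma).
split.
  exists (@MMap (obj M') Z (fun n x => mfun v x)
            (fun m n a x => @mfun_nat _ _ v m n a x) mk).
  by split=> n x //=; have := Huv n x => /= ->.
move=> w w' _ Hw _ Hw' n x.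
by have := Hw n x; have := Hw' n x => /= -> ->.
Qed.
End PushStep.
End Marks.

Lemma sop_le m n (c : sop m n) (i j : 'I_m.+1) : i <= j -> sop_fun c i <= sop_fun c j.
Proof.
move=> hij; have := sop_mono c.
by move/forallP => /(_ i) /forallP /(_ j) /implyP /(_ hij).
Qed.

Lemma mksop_mono m n (F : nat -> nat) (HF : forall i j, i <= j -> F i <= F j) :
  [forall i : 'I_m.+1, forall j : 'I_m.+1,
     (i <= j) ==> (([ffun v : 'I_m.+1 => inord (minn (F v) n)] : {ffun 'I_m.+1 -> 'I_n.+1}) i
                   <= ([ffun v : 'I_m.+1 => inord (minn (F v) n)] : {ffun 'I_m.+1 -> 'I_n.+1}) j)].
Proof.
apply/forallP=> i; apply/forallP=> j; apply/implyP=> hij; rewrite !ffunE.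
rewrite !inordK ?ltnS ?geq_minr //.
have := HF _ _ hij; lia.
Qed.

Definition mksop m n (F : nat -> nat) (HF : forall i j, i <= j -> F i <= F j) : sop m n :=
  Sop (mksop_mono m n HF).

Lemma mksopE m n F HF (i : 'I_m.+1) :
  nat_of_ord (sop_fun (@mksop m n F HF) i) = minn (F i) n.
Proof. by rewrite /= ffunE inordK // ltnS geq_minr. Qed.

Definition cnat m n (c : sop m n) (v : nat) : nat :=
  nat_of_ord (sop_fun c (inord (minn v m))).

Lemma cnat_mono m n (c : sop m n) v w : v <= w -> cnat c v <= cnat c w.
Proof.
move=> h; apply: sop_le; rewrite !inordK ?ltnS ?geq_minr //; lia.
Qed.

Lemma cnat_le m n (c : sop m n) v : cnat c v <= n.
Proof. by rewrite /cnat -ltnS. Qed.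

Lemma cnatE m n (c : sop m n) (i : 'I_m.+1) : cnat c i = sop_fun c i.
Proof.
rewrite /cnat; congr (nat_of_ord (sop_fun c _)); apply: val_inj.
rewrite /= inordK; have := ltn_ord i; lia.
Qed.

Lemma cnatE' m n (c : sop m n) v (h : v < m.+1) : cnat c v = sop_fun c (Ordinal h).
Proof. by rewrite -cnatE. Qed.

Lemma deg_act m n (a : sop m n) (Z : sSet) (z : simp Z n) :
  @degenerate (sdelta n) m a -> degenerate (act a z).
Proof.
case=> p [s [y [hp ->]]]; exists p, s, (act y z); split=> //.
by rewrite /= -act_comp.
Qed.

Lemma noninj_deg m n (c : sop m n) (i j : 'I_m.+1) :
  i != j -> sop_fun c i = sop_fun c j -> @degenerate (sdelta n) m c.
Proof.
wlog hij : i j / i < j.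
  move=> W ne E; case: (ltngtP i j) => h.
  - exact: (W i j).
  - by apply: (W j i) => //; rewrite eq_sym.
  - by move: ne; rewrite (val_inj h) eqxx.
move=> _ E.
set l := nat_of_ord i.
have hl : l < m by have := ltn_ord j; lia.
have El : cnat c l = cnat c l.+1.
  apply/eqP; rewrite eqn_leq cnat_mono //=.
  have := cnat_mono c (hij : l.+1 <= j).
  by rewrite /l !cnatE E.
case: m c i j hij E l hl El => [|m'] c i j hij E l hl El; first by [].
pose F := fun v => v - minn (v - l) 1.
have HF : forall v w, v <= w -> F v <= F w by move=> v w; rewrite /F; lia.
pose G := fun v => cnat c (v + minn (v - l) 1).
have HG : forall v w, v <= w -> G v <= G w.
  by move=> v w h; apply: cnat_mono; lia.
exists m', (@mksop m'.+1 m' F HF), (@mksop m' n G HG); split=> //.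
apply: sop_eq => v /=; apply: val_inj; rewrite ffunE /= (mksopE _ HG).
rewrite (minn_idPl (cnat_le _ _)) (mksopE _ HF) -(cnatE c v).
have hv := ltn_ord v.
have -> : minn (F v) m' = F v by rewrite /F; lia.
rewrite /F.
case: (ltngtP v l) => h.
- by congr (cnat c _); lia.
- case: (ltngtP v l.+1) => h2.
  + lia.
  + by congr (cnat c _); lia.
  + rewrite h2 -El; congr (cnat c _); lia.
- by congr (cnat c _); lia.
Qed.

Lemma sop_inj_id r (c : sop r r) :
  (forall i j, sop_fun c i = sop_fun c j -> i = j) ->
  forall i : 'I_r.+1, nat_of_ord (sop_fun c i) = i.
Proof.
move=> inj.
have strict : forall v w, v < w -> w <= r -> cnat c v < cnat c w.
  move=> v w hvw hw; rewrite ltn_neqAle cnat_mono ?andbT; last exact: ltnW.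
  apply/negP => /eqP E.
  have E2 := inj _ _ (val_inj E).
  have := congr1 (@nat_of_ord _) E2; rewrite !inordK; lia.
have low : forall v, v <= r -> v <= cnat c v.
  elim=> [//|v IH] hv; have := strict v v.+1 (ltnSn v) hv.
  have := IH (ltnW hv); lia.
have up : forall d v, v + d <= r -> cnat c v + d <= cnat c (v + d).
  elim=> [|d IH] v h; first by rewrite !addn0.
  have := IH v ltac:(lia).
  have := strict (v + d) (v + d.+1) ltac:(lia) h.
  rewrite addnS; lia.
move=> i; rewrite -cnatE; have hi := ltn_ord i.
have := low i (hi : (i <= r)%N); have := up (r - i) i ltac:(lia).
have := cnat_le c (i + (r - i)); lia.
Qed.

Lemma act_idop r (c : sop r r) (Z : sSet) (z : simp Z r) :
  (forall i : 'I_r.+1, nat_of_ord (sop_fun c i) = i) -> act c z = z.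
Proof.
move=> h; have -> : c = sop_id r by apply: sop_eq => i; apply: val_inj; rewrite ffunE /= h.
exact: act_id.
Qed.

Definition s0 r : sop r.+1 r := @mksop r.+1 r (fun v => v - 1) (fun v w h => leq_sub2r 1 h).
Lemma s1_mono (v w : nat) : v <= w -> minn v 1 + (v - 2) <= minn w 1 + (w - 2).
Proof. lia. Qed.
Definition s1 r : sop r.+1 r := @mksop r.+1 r (fun v => minn v 1 + (v - 2)) s1_mono.
Lemma d1_mono (v w : nat) : v <= w -> v + minn v 1 <= w + minn w 1.
Proof. lia. Qed.
Definition d1 r : sop r r.+1 := @mksop r r.+1 (fun v => v + minn v 1) d1_mono.

Lemma s0E r i : nat_of_ord (sop_fun (s0 r) i) = minn (i - 1) r.
Proof. exact: mksopE. Qed.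
Lemma s1E r i : nat_of_ord (sop_fun (s1 r) i) = minn (minn i 1 + (i - 2)) r.
Proof. exact: mksopE. Qed.
Lemma d1E r i : nat_of_ord (sop_fun (d1 r) i) = minn (i + minn i 1) r.+1.
Proof. exact: mksopE. Qed.

Lemma sopcompE k m n (a : sop m n) (b : sop k m) i :
  sop_fun (sop_comp a b) i = sop_fun a (sop_fun b i).
Proof. by rewrite /= ffunE. Qed.

Lemma s0d1 r (i : 'I_r.+1) : nat_of_ord (sop_fun (sop_comp (s0 r) (d1 r)) i) = i.
Proof. rewrite sopcompE s0E d1E; have := ltn_ord i; lia. Qed.
Lemma s1d1 r (i : 'I_r.+1) : nat_of_ord (sop_fun (sop_comp (s1 r) (d1 r)) i) = i.
Proof. rewrite sopcompE s1E d1E; have := ltn_ord i; lia. Qed.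

Section GenWO.
Variables (J : Type) (lt : J -> J -> Prop) (wo : is_wellorder lt).

Lemma wo_irr i : ~ lt i i.
Proof.
have [wf _] := wo; elim: (wf i) => {}i _ IH hi.
exact: (IH i hi hi).
Qed.

Lemma wo_trans i j k : lt i j -> lt j k -> lt i k.
Proof. by have [_ [tr _]] := wo; apply: tr. Qed.

Lemma wo_tot i j : i = j \/ lt i j \/ lt j i.
Proof. by have [_ [_ tot]] := wo. Qed.

Lemma succ_between i j k : wsucc lt i j -> lt i k -> lt k j -> False.
Proof.
move=> [_ H] ik kj; case: (H k ik) => [E|jk].
  by subst; exact: wo_irr kj.
exact: wo_irr (wo_trans jk kj).
Qed.

Lemma limit_between i j : wlimit lt j -> lt i j -> exists k, lt i k /\ lt k j.
Proof.
move=> [_ ns] ij; apply: NNPP => nb; apply: ns; exists i; split=> // k ik.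
case: (wo_tot j k) => [->|[jk|kj]]; [by left|by right|].
by exfalso; apply: nb; exists k.
Qed.
End GenWO.

Section WO.
Variables (W : eqType) (R : rel W) (HR : well_order R).

Lemma min_of (Q : W -> Prop) a : Q a -> exists z, Q z /\ forall w, Q w -> R z w.
Proof.
move=> Qa; have ne : nonempty [pred z | `[< Q z >]] by exists a; rewrite inE; apply/asboolP.
have [z [[zin lb] _]] := HR ne.
exists z; split; first by move: zin; rewrite inE => /asboolP.
by move=> w Qw; apply: lb; rewrite inE; apply/asboolP.
Qed.

Lemma Rrefl a : R a a.
Proof. by have [z [<- H]] := @min_of (eq a) a erefl; apply: H. Qed.

Lemma Rtot a b : R a b \/ R b a.
Proof.
have [z [[->|->] H]] := @min_of (fun z => z = a \/ z = b) a (or_introl erefl).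
  by left; apply: H; right.
by right; apply: H; left.
Qed.

Lemma Ranti a b : R a b -> R b a -> a = b.
Proof.
move=> ab ba.
have ne : nonempty [pred z | (z == a) || (z == b)] by exists a; rewrite inE eqxx.
have [z [_ U]] := HR ne.
have mA : minimum_of R [pred z | (z == a) || (z == b)] a.
  split; first by rewrite inE eqxx.
  by move=> w; rewrite inE => /orP[] /eqP ->; [exact: Rrefl|exact: ab].
have mB : minimum_of R [pred z | (z == a) || (z == b)] b.
  split; first by rewrite inE eqxx orbT.
  by move=> w; rewrite inE => /orP[] /eqP ->; [exact: ba|exact: Rrefl].
by rewrite -(U a mA) (U b mB).
Qed.

Lemma Rtrans a b c : R a b -> R b c -> R a c.
Proof.
move=> ab bc.
have [z [[->|[->|->]] H]] :=
  @min_of (fun z => z = a \/ z = b \/ z = c) a (or_introl erefl).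
- by apply: H; right; right.
- have ba : R b a by apply: H; left.
  by rewrite (Ranti ab ba).
- have cb : R c b by apply: H; right; left.
  have ca : R c a by apply: H; left.
  by rewrite -(Ranti bc cb).
Qed.

Definition ltW (a b : W) : Prop := R a b /\ a <> b.

Lemma ltW_wf : well_founded ltW.
Proof.
move=> a; apply: NNPP => na.
have [z [nz H]] := @min_of (fun z => ~ Acc ltW z) a na.
apply: nz; constructor=> w [wz neq]; apply: NNPP => nw.
by apply: neq; apply: Ranti wz (H w nw).
Qed.

Lemma ltW_trans a b c : ltW a b -> ltW b c -> ltW a c.
Proof.
move=> [ab nab] [bc nbc]; split; first exact: Rtrans ab bc.
move=> E; subst c; apply: nab; exact: Ranti ab bc.
Qed.

Lemma ltW_tot a b : a = b \/ ltW a b \/ ltW b a.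
Proof.
case: (classic (a = b)) => [->|ne]; first by left.
by case: (Rtot a b) => h; right; [left|right]; split=> // E; apply: ne.
Qed.

Inductive JJ := Jb | Jw of W | Jt.

Definition ltJ (i j : JJ) : Prop :=
  match i, j with
  | Jb, Jw _ => True | Jb, Jt => True
  | Jw a, Jw b => ltW a b | Jw _, Jt => True
  | _, _ => False end.

Lemma ltJ_wo : is_wellorder ltJ.
Proof.
split.
  have accb : Acc ltJ Jb by constructor=> j; case: j => [|b|] /= [].
  have accw : forall a, Acc ltJ (Jw a).
    move=> a; elim: (ltW_wf a) => {}a _ IH; constructor=> j.
    case: j => [|b|] /= h; [exact: accb|exact: IH|case: h].
  case=> [|a|]; [exact: accb|exact: accw|].
  constructor=> j; case: j => [|b|] /= h; [exact: accb|exact: accw|case: h].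
split.
  case=> [|a|] [|b|] [|c|] /= h1 h2; try done; exact: ltW_trans h1 h2.
case=> [|a|] [|b|] /=; try by [left|right;left|right;right].
case: (ltW_tot a b) => [->|[h|h]]; [by left|by right;left|by right;right].
Qed.

Lemma ltJ_least i : wle ltJ Jb i.
Proof. by case: i => [|a|]; [left|right|right]. Qed.
End WO.

Section Prod.
Variables (A X B Y : msSet) (f : mmap A X) (g : mmap B Y)
  (fi : forall n, simp (uss X) n -> simp (uss A) n)
  (gi : forall n, simp (uss Y) n -> simp (uss B) n).
Hypotheses (fK : forall n (x : simp (uss X) n), mfun f (fi x) = x)
  (fiK : forall n (a : simp (uss A) n), fi (mfun f a) = a)
  (gK : forall n (y : simp (uss Y) n), mfun g (gi y) = y)
  (giK : forall n (b : simp (uss B) n), gi (mfun g b) = b).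

Lemma fi_nat m n (a : sop m n) (x : simp (uss X) n) : fi (act a x) = act a (fi x).
Proof. by rewrite -{1}(fK x) -mfun_nat fiK. Qed.
Lemma gi_nat m n (a : sop m n) (y : simp (uss Y) n) : gi (act a y) = act a (gi y).
Proof. by rewrite -{1}(gK y) -mfun_nat giK. Qed.

Lemma degA n (x : simp (uss X) n) : degenerate x -> marked (fi x).
Proof.
case=> p [s [z [hp ->]]]; apply: marked_degen; exists p, s, (fi z).
by rewrite fi_nat.
Qed.
Lemma degB n (y : simp (uss Y) n) : degenerate y -> marked (gi y).
Proof.
case=> p [s [z [hp ->]]]; apply: marked_degen; exists p, s, (gi z).
by rewrite gi_nat.
Qed.

Definition TT := sprod (uss X) (uss Y).

Definition MQP n (t : simp TT n) : Prop :=
  (marked (fi t.1) /\ marked t.2) \/ (marked t.1 /\ marked (gi t.2)).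

Lemma MQP_pos n (t : simp TT n) : MQP t -> 0 < n.
Proof. by case=> [[h _]|[h _]]; exact: marked_pos h. Qed.

Lemma deg_fst n (t : simp TT n) : degenerate t -> degenerate t.1.
Proof. by case=> p [s [z [hp ->]]]; exists p, s, z.1. Qed.
Lemma deg_snd n (t : simp TT n) : degenerate t -> degenerate t.2.
Proof. by case=> p [s [z [hp ->]]]; exists p, s, z.2. Qed.

Lemma MQP_deg n (t : simp TT n) : degenerate t -> MQP t.
Proof.
move=> d; left; split; first exact: degA (deg_fst d).
exact: marked_degen (deg_snd d).
Qed.

Definition MQ : mark TT := Mark MQP_pos MQP_deg.
Definition fullm : mark TT := @Mark TT (@prod_marked X Y) (@prod_marked_pos X Y)
  (@prod_marked_degen X Y).

Lemma MQ_full : submark MQ fullm.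
Proof.
move=> n t [[h1 h2]|[h1 h2]]; split=> //.
  by rewrite -(fK t.1); exact: mfun_mark.
by rewrite -(gK t.2); exact: mfun_mark.
Qed.

Section Key.
Variables (r : nat) (x : simp (uss X) r) (y : simp (uss Y) r).
Hypotheses (hr : 0 < r) (hx : marked x) (hy : marked y).

Definition sg : simp TT r.+1 := (act (s0 r) x, act (s1 r) y).

Lemma act_sg m (a : sop m r.+1) :
  act a sg = (act (sop_comp (s0 r) a) x, act (sop_comp (s1 r) a) y).
Proof. by rewrite /= !act_comp. Qed.

Lemma sg_d1 : act (d1 r) sg = (x, y).
Proof.
rewrite act_sg act_idop; last exact: s0d1.
by rewrite act_idop //; exact: s1d1.
Qed.

Lemma noninj_or m n (c : sop m n) :
  (forall i j, sop_fun c i = sop_fun c j -> i = j) \/ @degenerate (sdelta n) m c.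
Proof.
case: (classic (forall i j, sop_fun c i = sop_fun c j -> i = j)) => h; [by left|right].
move/not_all_ex_not: h => [i]. move/not_all_ex_not => [j] H. have [E ne] := imply_to_and _ _ H.
by apply: (noninj_deg (i := i) (j := j)) => //; apply/eqP.
Qed.

Lemma extra_case (a : sop r r.+1) :
  MQP (act a sg) \/
  ((forall i, nat_of_ord (sop_fun (sop_comp (s0 r) a) i) = i) /\
   (forall i, nat_of_ord (sop_fun (sop_comp (s1 r) a) i) = i)).
Proof.
rewrite act_sg.
case: (noninj_or (sop_comp (s0 r) a)) => [ic|dc];
case: (noninj_or (sop_comp (s1 r) a)) => [id|dd].
- by right; split; [exact: sop_inj_id ic | exact: sop_inj_id id].
- left; right; split; first by rewrite /= act_idop //; apply: sop_inj_id.
  exact: degB (@deg_act _ _ _ _ y dd).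
- left; left; split; first exact: degA (@deg_act _ _ _ _ x dc).
  by rewrite /= act_idop //; apply: sop_inj_id.
- left; left; split; first exact: degA (@deg_act _ _ _ _ x dc).
  exact: marked_degen (@deg_act _ _ _ _ y dd).
Qed.

Lemma H1 m (a : sop m r.+1) : @marked (cDelta' r.+1 1) m a -> MQP (act a sg).
Proof.
case=> _ [da|[[nd hull]|[em [nd [i hi]]]]].
- by apply: MQP_deg; apply: (@deg_act _ _ _ _ sg da).
- have [i0 h0] := hull 0 ltac:(done) ltac:(done) ltac:(done).
  have [i1 h1] := hull 1 ltac:(done) ltac:(done) ltac:(done).
  have [i2 h2] := hull 2 ltac:(lia) ltac:(done) ltac:(done).
  left; rewrite act_sg; split.
    apply: degA; apply: deg_act; apply: (noninj_deg (i := i0) (j := i1)).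
      by apply/negP => /eqP E; move: h0 h1; rewrite E => ->.
    by apply: ord_inj; rewrite !sopcompE !s0E h0 h1.
  apply: marked_degen; apply: deg_act; apply: (noninj_deg (i := i1) (j := i2)).
    by apply/negP => /eqP E; move: h1 h2; rewrite E => ->.
  by apply: ord_inj; rewrite !sopcompE !s1E h1 h2.
- move: a nd hi; rewrite subn1 /= in em; subst m => a nd hi.
  case: (extra_case a) => [//|[e0 e1]].
  have := e0 i; have := e1 i; rewrite !sopcompE s0E s1E hi; lia.
Qed.

Lemma H2 (M' : mark TT) (sub : submark MQ M') (mt : mM M' ((x, y) : simp TT r))
  m (a : sop m r.+1) : @marked (cDelta'' r.+1 1) m a -> mM M' (act a sg).
Proof.
case=> hm [da|[[nd hull]|em]].
- by apply: sub; apply: H1; split=> //; left.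
- by apply: sub; apply: H1; split=> //; right; left.
- move: a; rewrite subn1 in em; subst m => a.
  case: (extra_case a) => [h|[e0 e1]]; first exact: sub.
  by rewrite act_sg !act_idop.
Qed.

Lemma d1_marked : @marked (cDelta'' r.+1 1) r (d1 r).
Proof. by split=> //; right; right; rewrite subn1. Qed.
End Key.
End Prod.

Definition Wt (T : sSet) := {n : nat & simp T n}.
HB.instance Definition _ (T : sSet) := gen_eqMixin (Wt T).

Section Main.
Variables (A X B Y : msSet) (f : mmap A X) (g : mmap B Y)
  (fi : forall n, simp (uss X) n -> simp (uss A) n)
  (gi : forall n, simp (uss Y) n -> simp (uss B) n).
Hypotheses (fK : forall n (x : simp (uss X) n), mfun f (fi x) = x)
  (fiK : forall n (a : simp (uss A) n), fi (mfun f a) = a)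
  (gK : forall n (y : simp (uss Y) n), mfun g (gi y) = y)
  (giK : forall n (b : simp (uss B) n), gi (mfun g b) = b).
Variables (P : msSet) (l1 : mmap (mprod_ms A Y) P) (l2 : mmap (mprod_ms X B) P).
Hypothesis Hpo : is_pushout (mprod (mid A) g) (mprod f (mid B)) l1 l2.
Variable h : mmap P (mprod_ms X Y).
Hypotheses (Hh1 : meq (mcomp h l1) (mprod f (mid Y)))
  (Hh2 : meq (mcomp h l2) (mprod (mid X) g)).

Let T := TT X Y.
Let MQm : mark T := MQ gi fK fiK.
Let MQP' n (t : simp T n) := MQP fi gi t.

Lemma u0_nat m n (a : sop m n) (p : simp (uss (mprod_ms A Y)) n) :
  ((mfun f (act a p.1), act a p.2) : simp T m) = act a ((mfun f p.1, p.2) : simp T n).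
Proof. by rewrite /= mfun_nat. Qed.
Lemma u0_mark n (p : simp (uss (mprod_ms A Y)) n) :
  marked p -> @marked (obj MQm) n (mfun f p.1, p.2).
Proof. by case=> h1 h2; left; rewrite /= fiK. Qed.
Definition u0 : mmap (mprod_ms A Y) (obj MQm) := @MMap (mprod_ms A Y) (obj MQm)
  (fun n (p : simp (uss (mprod_ms A Y)) n) => ((mfun f p.1, p.2) : simp T n)) u0_nat u0_mark.

Lemma v0_nat m n (a : sop m n) (p : simp (uss (mprod_ms X B)) n) :
  ((act a p.1, mfun g (act a p.2)) : simp T m) = act a ((p.1, mfun g p.2) : simp T n).
Proof. by rewrite /= mfun_nat. Qed.
Lemma v0_mark n (p : simp (uss (mprod_ms X B)) n) :
  marked p -> @marked (obj MQm) n (p.1, mfun g p.2).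
Proof. by case=> h1 h2; right; rewrite /= giK. Qed.
Definition v0 : mmap (mprod_ms X B) (obj MQm) := @MMap (mprod_ms X B) (obj MQm)
  (fun n (p : simp (uss (mprod_ms X B)) n) => ((p.1, mfun g p.2) : simp T n)) v0_nat v0_mark.

Lemma k_nat m n (a : sop m n) (t : simp T n) :
  mfun l1 (fi (act a t.1), act a t.2) = act a (mfun l1 (fi t.1, t.2)).
Proof. by rewrite (fi_nat fK fiK) -(mfun_nat l1 a ((fi t.1, t.2) : simp (uss (mprod_ms A Y)) n)). Qed.

Lemma l12 n (x : simp (uss X) n) (y : simp (uss Y) n) :
  mfun l1 (fi x, y) = mfun l2 (x, gi y).
Proof.
have := (proj1 Hpo) n (fi x, gi y) => /=; by rewrite gK fK.
Qed.

Lemma k_mark n (t : simp T n) : @marked (obj MQm) n t -> marked (mfun l1 (fi t.1, t.2)).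
Proof.
case=> [[h1 h2]|[h1 h2]]; first by apply: mfun_mark; split.
by rewrite l12; apply: mfun_mark; split.
Qed.
Definition k : mmap (obj MQm) P := @MMap (obj MQm) P
  (fun n (t : simp T n) => mfun l1 ((fi t.1, t.2) : simp (uss (mprod_ms A Y)) n)) k_nat k_mark.

Lemma w_ex : exists w : mmap P (obj MQm), meq (mcomp w l1) u0 /\ meq (mcomp w l2) v0.
Proof. by apply: (proj1 ((proj2 Hpo) _ u0 v0 _)) => n x. Qed.

Section W.
Variables (w : mmap P (obj MQm)) (Hw1 : meq (mcomp w l1) u0) (Hw2 : meq (mcomp w l2) v0).

Lemma kw : meq (mcomp k w) (mid P).
Proof.
have [_ U] := (proj2 Hpo) P l1 l2 (proj1 Hpo).
apply: U => // n p /=.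
- have E := Hw1 p; rewrite /= in E; rewrite E /= fiK; by case: (p) E.
- have E := Hw2 p; rewrite /= in E; rewrite E /= l12 giK; by case: (p) E.
Qed.

Lemma wk : meq (mcomp w k) (mid (obj MQm)).
Proof.
move=> n t /=; have E := Hw1 ((fi t.1, t.2) : simp (uss (mprod_ms A Y)) n).
rewrite /= in E; rewrite E /= fK; by case: (t) E.
Qed.

Lemma hw : meq h (mcomp (incl (MQ_full gK)) w).
Proof.
have [_ U] := (proj2 Hpo) (mprod_ms X Y) (mprod f (mid Y)) (mprod (mid X) g) (fun n x => erefl).
apply: U => //.
Qed.
End W.

Section Chain.
Variables (R : rel (Wt T)) (HR : well_order R).
Let J := JJ (Wt T).
Let lt := @ltJ (Wt T) R.

Definition MkP (j : J) n (t : simp T n) : Prop :=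
  MQP fi gi t \/ (@prod_marked X Y n t /\ lt (Jw (existT _ n t : Wt T)) j).

Lemma MkP_pos j n (t : simp T n) : MkP j t -> 0 < n.
Proof. by case=> [/MQP_pos|[/prod_marked_pos]]. Qed.
Lemma MkP_deg j n (t : simp T n) : degenerate t -> MkP j t.
Proof. by move=> d; left; exact: (MQP_deg gi fK fiK d). Qed.
Definition Mk (j : J) : mark T := Mark (@MkP_pos j) (@MkP_deg j).

Lemma Mk_mono i j : wle lt i j -> submark (Mk i) (Mk j).
Proof.
move=> p n t [mq|[fm lj]]; first by left.
right; split=> //; case: p => [<-//|ij].
exact: (wo_trans (ltJ_wo HR) lj ij).
Qed.

Lemma Mk_sub_full j : submark (Mk j) (fullm X Y).
Proof. by move=> n t [mq|[fm _]] //; exact: (MQ_full gK mq). Qed.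

Lemma MQ_Mk j : submark MQm (Mk j).
Proof. by move=> n t mq; left. Qed.

Lemma Mk_MQ : submark (Mk (@Jb (Wt T))) MQm.
Proof. by move=> n t [mq|[_ []]]. Qed.

Variables (PC : mclass) (HE : contains_elementary PC) (HP : closed_pushout PC)
  (HT : closed_transfinite PC).

Lemma succ_step i j (p : wle lt i j) : wsucc lt i j -> PC (incl (Mk_mono p)).
Proof.
move=> hs; have wo := ltJ_wo HR.
case: i p hs => [|a|] p hs.
- apply: (incl_iso HT (Mk_mono p)) => n t [mq|[fm lj]]; first by left.
  by exfalso; apply: (succ_between wo hs _ lj).
- case: a p hs => r t0 p hs.
  have Hlt : lt (Jw (existT _ r t0 : Wt T)) j by case: hs.
  have between : forall n (t : simp T n), mM (Mk j) t -> MQP fi gi t \/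
      (@prod_marked X Y n t /\ (ltW R (existT _ n t : Wt T) (existT _ r t0) \/
         (existT _ n t : Wt T) = existT _ r t0)).
    move=> n t [mq|[fm lj]]; first by left.
    right; split=> //.
    case: (ltW_tot HR (existT _ n t : Wt T) (existT _ r t0)) => [E|[l|l]].
    + by right.
    + by left.
    + by exfalso; apply: (succ_between wo hs (l : lt (Jw _) (Jw _)) lj).
  case: (classic (@prod_marked X Y r t0 /\ ~ MQP fi gi t0)) => [[fm0 nq0]|nfm].
  + have hr := prod_marked_pos fm0.
    case: t0 fm0 nq0 p hs Hlt between => x y [hx hy] nq0 p hs Hlt between.
    have mt : mM (Mk j) ((x, y) : simp T r) by right; split.
    have H1' : forall m (a : sop m r.+1), @marked (cDelta' r.+1 1) m a ->
        mM (Mk (Jw (existT _ r ((x, y) : simp T r) : Wt T))) (act a (sg x y)).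
      by move=> m a ha; left; exact: (H1 fK fiK gK giK hr hx hy ha).
    have H2' : forall m (a : sop m r.+1), @marked (cDelta'' r.+1 1) m a ->
        mM (Mk j) (act a (sg x y)).
      by move=> m a ha; exact: (H2 gK giK hr hx hy (MQ_Mk j) mt ha).
    have key : forall q : Wt T, q = existT _ r ((x, y) : simp T r) ->
        exists b : sop (projT1 q) r.+1, @marked (cDelta'' r.+1 1) _ b /\ projT2 q = act b (sg x y).
      move=> q ->; exists (d1 r); split; first exact: d1_marked hr.
      by rewrite sg_d1.
    have H3' : forall n (t : simp T n), mM (Mk j) t -> mM (Mk (Jw (existT _ r ((x, y) : simp T r) : Wt T))) t \/
        exists b : sop n r.+1, @marked (cDelta'' r.+1 1) n b /\ t = act b (sg x y).
      move=> n t /between [mq|[fm [l|E]]]; first by left; left.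
        by left; right; split.
      by right; exact: (key _ E).
    move: (push_step (Mk_mono p) H1' H2' H3') => /HP; apply.
    by apply: HE.
  + apply: (incl_iso HT (Mk_mono p)) => n t /between [mq|[fm [l|E]]]; first by left.
      by right; split.
    have key : forall q : Wt T, q = existT _ r t0 ->
        @prod_marked X Y _ (projT2 q) -> MQP fi gi (projT2 q).
      move=> q -> /= fm'; apply: NNPP => nq; apply: nfm; by split.
    by left; exact: (key _ E fm).
- by case: hs; case: j p.
Qed.

Lemma limit_step j : wlimit lt j ->
  @is_colim_on J lt (mchain Mk_mono) (fun i => lt i j) (obj (Mk j))
    (fun i (hi : lt i j) => incl (Mk_mono (or_intror hi : wle lt i j))).
Proof.
move=> hl; have wo := ltJ_wo HR.
apply: (@mchain_colim _ _ _ _ Mk_mono (fun i => lt i j) (Mk j) (fun i (hi : lt i j) => Mk_mono (or_intror hi))).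
- move=> n t [mq|[fm lj]].
    have [i0 hi0] := hl.1.
    exists (@Jb (Wt T)); split; last by left.
    by case: j hl hi0 => [|b|] // _; case: i0.
  have [k [h1 h2]] := limit_between wo hl lj.
  by exists k; split=> //; right; split.
- exact: wo_tot wo.
- exact: hl.1.
Qed.

Lemma chain_main : PC (incl (@Mk_sub_full (@Jb (Wt T)))).
Proof.
have wo := ltJ_wo HR.
have := HT wo (@ltJ_least _ R) limit_step succ_step
  (@mchain_colim _ _ _ _ Mk_mono (fun _ => True) (fullm X Y)
     (fun i _ => @Mk_sub_full i) _ (wo_tot wo) (ex_intro _ (@Jb (Wt T)) I)).
apply.
move=> n t fm; exists (@Jt (Wt T)); split=> //; by right; split.
Qed.
End Chain.

Lemma main_P : complicial_marking_extension h.
Proof.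
move=> PC HE HP HT.
have [w [Hw1 Hw2]] := w_ex.
have [R HR] := well_ordering_principle (Wt T).
have E : h = mcomp (incl (Mk_sub_full (R:=R) (j:=@Jb (Wt T))))
               (mcomp (incl (@MQ_Mk R (@Jb (Wt T)))) w).
  apply: meq_eq => n x; have := hw Hw1 Hw2 x => /= ->; by [].
rewrite E; apply: (comp_P HT); last exact: (chain_main HR HE HP HT).
apply: (comp_P HT); last exact: (incl_iso HT _ (@Mk_MQ R)).
exact: (iso_P HT (kw Hw1 Hw2) (wk Hw1)).
Qed.
End Main.

Theorem proposition1p18 (A X B Y : msSet) (f : mmap A X) (g : mmap B Y) :
  entire f -> entire g ->
  forall (P : msSet) (l1 : mmap (mprod_ms A Y) P) (l2 : mmap (mprod_ms X B) P),
    is_pushout (mprod (mid A) g) (mprod f (mid B)) l1 l2 ->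
    forall h : mmap P (mprod_ms X Y),
      meq (mcomp h l1) (mprod f (mid Y)) ->
      meq (mcomp h l2) (mprod (mid X) g) ->
      complicial_marking_extension h.
Proof.
move=> ef eg P l1 l2 Hpo h Hh1 Hh2.
have bf : forall n, {fi : simp (uss X) n -> simp (uss A) n |
    cancel (@mfun A X f n) fi /\ cancel fi (@mfun A X f n)}.
  move=> n; apply: constructive_indefinite_description.
  by case: (ef n) => fi h1 h2; exists fi.
have bg : forall n, {gi : simp (uss Y) n -> simp (uss B) n |
    cancel (@mfun B Y g n) gi /\ cancel gi (@mfun B Y g n)}.
  move=> n; apply: constructive_indefinite_description.
  by case: (eg n) => gi h1 h2; exists gi.
apply: (@main_P A X B Y f g (fun n => sval (bf n)) (fun n => sval (bg n))) Hpo h Hh1 Hh2.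
- by move=> n x; case: (bf n) => fi [h1 h2].
- by move=> n x; case: (bf n) => fi [h1 h2].
- by move=> n x; case: (bg n) => gi [h1 h2].
- by move=> n x; case: (bg n) => gi [h1 h2].
Qed.
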